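(* For an integer $j\ge1$ and $r\in(0,1)$, let $$B_j(r)=-1-2r+2jr-r^2-\frac{(1-r)^j}{(1+r)^{j-2}}.$$ For every integer $k>2$ the following hold. 1. There exists a unique $r(k)\in(0,1)$ with $B_k(r(k))=0$. Equivalently, $r(k)$ is the unique point in $(0,1)$ at which $K_k(r)=-\frac{1-r}{8(1+r)^2}B_k(r)$ vanishes. 2. $r(k)$ is a simple root, i.e. $B_k'(r(k))\neq0$. 3. $B_j(r(k))\neq0$ for every integer $j\ge1$ with $j\neq k$. Moreover, the coefficient $y_1=-\frac{3r+1}{4(1+r)^2}$ is nonzero. 4. If $k_1>k_2>2$, then $r(k_1)<r(k_2)$. *)

(* Defs.v *)
From Stdlib Require Import Reals Lra ZArith.
Open Scope R_scope.

(* B_j(r) = -1 - 2r + 2jr - r^2 - (1-r)^j / (1+r)^(j-2),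
   the exponent j-2 is an integer (it is -1 when j = 1). *)
Definition B (j : nat) (r : R) : R :=
  -1 - 2 * r + 2 * INR j * r - r ^ 2
  - (1 - r) ^ j / powerRZ (1 + r) (Z.of_nat j - 2).

Definition K (k : nat) (r : R) : R :=
  - ((1 - r) / (8 * (1 + r) ^ 2)) * B k r.

Definition y1 (r : R) : R := - ((3 * r + 1) / (4 * (1 + r) ^ 2)).

(* Main.v *)
Require Import Defs.
From Stdlib Require Import Reals ZArith Lra Lia.
From Coquelicot Require Import Coquelicot.
Open Scope R_scope.

Definition F (j : nat) (t : R) : R := INR j * (1 - t ^ 2) / 2 - 1 - t ^ j.

Lemma B_F j r : -1 < r -> B j r = (1 + r) ^ 2 * F j ((1 - r) / (1 + r)).
Proof.
  intros Hr. unfold B, F. assert (h : 1 + r <> 0) by lra.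
  replace (Z.of_nat j - 2)%Z with (Z.of_nat j + (-2))%Z by lia.
  rewrite powerRZ_add by auto. rewrite <- pow_powerRZ. simpl (powerRZ _ (-2)).
  unfold Rdiv. rewrite !Rpow_mult_distr, !pow_inv.
  assert ((1 + r) ^ j <> 0) by (apply pow_nonzero; auto).
  field. auto.
Qed.

Lemma F_dec j s t : (1 <= j)%nat -> 0 <= s -> s < t -> F j t < F j s.
Proof.
  intros Hj Hs Hst. unfold F.
  assert (1 <= INR j) by (pose proof (le_INR 1 j Hj) as hh; simpl in hh; lra).
  assert (s ^ j <= t ^ j) by (apply pow_incr; lra).
  simpl (s ^ 2); simpl (t ^ 2).
  assert (0 < t * (t * 1) - s * (s * 1)) by nra.
  assert (0 < INR j * (t * (t * 1) - s * (s * 1))) by (apply Rmult_lt_0_compat; lra).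
  nra.
Qed.

Lemma F_step j t : 0 <= t < 1 -> F j t < F (S j) t.
Proof.
  intros Ht. unfold F. rewrite S_INR. simpl (t ^ S j).
  assert (0 <= t ^ j) by (apply pow_le; lra).
  simpl (t ^ 2). nra.
Qed.

Lemma F_mono j k t : (j < k)%nat -> 0 <= t < 1 -> F j t < F k t.
Proof.
  intros Hjk Ht. induction Hjk.
  - apply F_step; auto.
  - eapply Rlt_trans; [apply IHHjk | apply F_step; auto].
Qed.

Lemma t_range r : 0 < r < 1 -> 0 < (1 - r) / (1 + r) < 1.
Proof.
  intros Hr. assert (H1 : (1 + r) * / (1 + r) = 1) by (field; lra).
  assert (0 < / (1 + r)) by (apply Rinv_0_lt_compat; lra).
  unfold Rdiv. split; nra.
Qed.

Lemma root_uniq k t s : (1 <= k)%nat -> 0 <= t -> 0 <= s -> F k t = 0 -> F k s = 0 -> t = s.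
Proof.
  intros Hk Ht Hs H1 H2. destruct (Rtotal_order t s) as [h|[h|h]]; auto.
  - pose proof (F_dec k t s Hk Ht h). lra.
  - pose proof (F_dec k s t Hk Hs h). lra.
Qed.

Lemma t_anti r1 r2 : 0 < r1 -> r1 <= r2 -> (1 - r2) / (1 + r2) <= (1 - r1) / (1 + r1).
Proof.
  intros H1 H2.
  replace ((1 - r2) / (1 + r2)) with (2 * / (1 + r2) - 1) by (field; lra).
  replace ((1 - r1) / (1 + r1)) with (2 * / (1 + r1) - 1) by (field; lra).
  assert (/ (1 + r2) <= / (1 + r1)) by (apply Rinv_le_contravar; lra). lra.
Qed.

Lemma B_deriv m r : 0 < r < 1 -> exists l, derivable_pt_lim (B (m + 3)) r l /\ l <> 0.
Proof.
  intros Hr.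
  assert (E : forall z, -1 - 2*z + 2*INR (m+3)*z - z^2 - (1-z)^(m+3)/(1+z)^(m+1) = B (m+3) z).
  { intro z. unfold B. replace (Z.of_nat (m + 3) - 2)%Z with (Z.of_nat (m + 1)) by lia.
    rewrite <- pow_powerRZ. reflexivity. }
  eexists. split.
  - eapply derivable_pt_lim_ext; [exact E|]. apply is_derive_Reals. auto_derive.
    + apply pow_nonzero; lra.
    + reflexivity.
  - replace (Init.Nat.pred (m + 3)) with (m + 2)%nat by lia.
    replace (Init.Nat.pred (m + 1)) with m by lia.
    assert (3 <= INR (m + 3)) by (pose proof (le_INR 3 (m+3) ltac:(lia)) as hh; simpl in hh; lra).
    assert (0 <= INR (m + 1)) by apply pos_INR.
    set (A := (1 + - r) ^ (m + 2)). set (C := (1 + - r) ^ (m + 3)).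
    set (D := (1 + r) ^ (m + 1)). set (G := (1 + r) ^ m).
    assert (0 < A) by (apply pow_lt; lra).
    assert (0 < C) by (apply pow_lt; lra).
    assert (0 < D) by (apply pow_lt; lra).
    assert (0 < G) by (apply pow_lt; lra).
    assert (0 < / D) by (apply Rinv_0_lt_compat; lra).
    assert (0 < / (D * D)) by (apply Rinv_0_lt_compat; nra).
    assert (0 <= INR (m + 3) * A * / D) by (apply Rmult_le_pos; [apply Rmult_le_pos|]; lra).
    assert (0 <= C * (INR (m+1) * G) * / (D * D)).
    { apply Rmult_le_pos; [|lra]. apply Rmult_le_pos; [lra|apply Rmult_le_pos; lra]. }
    apply Rgt_not_eq. nra.
Qed.

Theorem mainTheorem6 :
  (forall k : nat, (2 < k)%nat ->
     exists rk : R,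
       (0 < rk < 1 /\ B k rk = 0) /\
       (* uniqueness of the root of B_k in (0,1) *)
       (forall r, 0 < r < 1 -> B k r = 0 -> r = rk) /\
       (* equivalently rk is the unique zero of K_k in (0,1) *)
       (forall r, 0 < r < 1 -> (K k r = 0 <-> r = rk)) /\
       (* simple root *)
       (exists l : R, derivable_pt_lim (B k) rk l /\ l <> 0) /\
       (* B_j (rk) <> 0 for j >= 1, j <> k *)
       (forall j : nat, (1 <= j)%nat -> j <> k -> B j rk <> 0) /\
       y1 rk <> 0) /\
  (* monotonicity: k1 > k2 > 2 implies r(k1) < r(k2) *)
  (forall (k1 k2 : nat) (r1 r2 : R), (2 < k2)%nat -> (k2 < k1)%nat ->
     0 < r1 < 1 -> B k1 r1 = 0 -> 0 < r2 < 1 -> B k2 r2 = 0 -> r1 < r2).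
Proof.
  split.
  - intros k Hk.
    assert (Hk3 : 3 <= INR k) by (pose proof (le_INR 3 k ltac:(lia)) as hh; simpl in hh; lra).
    assert (Hc : continuity (fun t => - F k t)).
    { unfold F. reg. }
    assert (H0 : - F k 0 < 0).
    { unfold F. rewrite !pow_i by lia. lra. }
    assert (H1 : 0 < - F k 1).
    { unfold F. rewrite !pow1. lra. }
    destruct (IVT _ 0 1 Hc Rlt_0_1 H0 H1) as [t0 [Ht0 Ft0]].
    assert (Ft0' : F k t0 = 0) by lra.
    assert (t0 <> 0) by (intro; subst; lra).
    assert (t0 <> 1) by (intro; subst; lra).
    assert (Htr : 0 < t0 < 1) by lra.
    set (rk := (1 - t0) / (1 + t0)).
    assert (Hrk : 0 < rk < 1) by (apply t_range in Htr; unfold rk;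
      replace ((1 - t0) / (1 + t0)) with ((1 - t0) / (1 + t0)) by reflexivity; lra).
    assert (Hinv : (1 - rk) / (1 + rk) = t0) by (unfold rk; field; lra).
    assert (HB : B k rk = 0) by (rewrite B_F by lra; rewrite Hinv, Ft0'; ring).
    assert (Hu : forall r, 0 < r < 1 -> B k r = 0 -> r = rk).
    { intros r Hr HBr. rewrite B_F in HBr by lra.
      assert (0 < (1 + r) ^ 2) by (apply pow_lt; lra).
      assert (Fr : F k ((1 - r) / (1 + r)) = 0).
      { destruct (Rmult_integral _ _ HBr); [lra|auto]. }
      pose proof (t_range r Hr).
      assert (e : (1 - r) / (1 + r) = t0) by (apply (root_uniq k); try lia; lra).
      unfold rk. rewrite <- e. field. lra. }
    exists rk. split; [auto|]. split; [auto|]. split; [|split; [|split]].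
    + intros r Hr. unfold K. split.
      * intro HK. apply Hu; auto.
        assert (0 < (1 - r) / (8 * (1 + r) ^ 2)).
        { apply Rdiv_lt_0_compat; [lra|]. assert (0 < (1+r)^2) by (apply pow_lt; lra). lra. }
        destruct (Rmult_integral _ _ HK); [lra|auto].
      * intro e. subst r. rewrite HB. ring.
    + replace k with ((k - 3) + 3)%nat by lia. apply B_deriv; auto.
    + intros j Hj Hjk. rewrite B_F by lra. rewrite Hinv.
      assert (0 < (1 + rk) ^ 2) by (apply pow_lt; lra).
      destruct (Nat.lt_total j k) as [h|[h|h]]; [|contradiction|].
      * pose proof (F_mono j k t0 h ltac:(lra)). nra.
      * pose proof (F_mono k j t0 h ltac:(lra)). nra.
    + unfold y1. assert (0 < (3 * rk + 1) / (4 * (1 + rk) ^ 2)).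
      { apply Rdiv_lt_0_compat; [lra|]. assert (0 < (1+rk)^2) by (apply pow_lt; lra). lra. }
      lra.
  - intros k1 k2 r1 r2 H2 H12 Hr1 HB1 Hr2 HB2.
    rewrite B_F in HB1, HB2 by lra.
    assert (0 < (1 + r1) ^ 2) by (apply pow_lt; lra).
    assert (0 < (1 + r2) ^ 2) by (apply pow_lt; lra).
    assert (F1 : F k1 ((1 - r1) / (1 + r1)) = 0) by (destruct (Rmult_integral _ _ HB1); [lra|auto]).
    assert (F2 : F k2 ((1 - r2) / (1 + r2)) = 0) by (destruct (Rmult_integral _ _ HB2); [lra|auto]).
    pose proof (t_range r1 Hr1). pose proof (t_range r2 Hr2).
    pose proof (F_mono k2 k1 ((1 - r2) / (1 + r2)) H12 ltac:(lra)).
    destruct (Rlt_or_le r1 r2) as [h|h]; auto. exfalso.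
    pose proof (t_anti r2 r1 ltac:(lra) h) as Ht.
    destruct (Rle_lt_or_eq_dec _ _ Ht) as [h'|h'].
    + pose proof (F_dec k1 ((1 - r1) / (1 + r1)) ((1 - r2) / (1 + r2)) ltac:(lia) ltac:(lra) h'). lra.
    + rewrite h' in F1. lra.
Qed.
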